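(* Let $k\geq 1$ and let $\zeta_1,\dots,\zeta_k\in(0,1)$ be real numbers such that $1,\zeta_1,\dots,\zeta_k$ are linearly independent over $\mathbb{Q}$. With the sequences $b_n^{(s)}$, $b_n^{\prime(s)}$ defined in the context, $$\omega\geq\max\left\{\sup_{s\geq 2}\limsup_{n\to\infty}\frac{b^{(s)}_{n+1}-b^{(s)}_n-1}{b^{(s)}_n},\ \sup_{s\ge2}\limsup_{n\to\infty}\frac{b^{\prime(s)}_{n+1}-b^{\prime(s)}_n-1}{b^{\prime(s)}_n}\right\}.$$
   Context: For $X>0$ let $\omega_1(X)$ be the supremum of all real $\nu$ such that $|x|\leq X$, $|\zeta_i x-y_i|\leq X^{-\nu}$ ($1\le i\le k$) has a nonzero solution $(x,y_1,\dots,y_k)\in\mathbb{Z}^{k+1}$; $\omega=\limsup_{X\to\infty}\omega_1(X)$. For an integer $s\ge2$, let $a_1^{i,(s)}<a_2^{i,(s)}<\cdots$ be the positions (after the point) of the nonzero digits in the base-$s$ expansion of $\zeta_i$, and $a_1^{\prime i,(s)}<a_2^{\prime i,(s)}<\cdots$ the positions of the nonzero digits in the base-$s$ expansion of $1-\zeta_i$. Let $(b_n^{(s)})_{n\ge1}$ be the increasing enumeration of $\{a_n^{i,(s)}:1\le i\le k, n\ge1\}$ and $(b_n^{\prime(s)})_{n\ge1}$ the increasing enumeration of $\{a_n^{\prime i,(s)}:1\le i\le k,n\ge1\}$. *)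

(* Defs.v *)
From HB Require Import structures.
From mathcomp Require Import all_boot all_order all_algebra.
From mathcomp Require Import all_classical all_reals all_analysis.
Set Implicit Arguments. Unset Strict Implicit. Unset Printing Implicit Defensive.
Import Order.TTheory GRing.Theory Num.Theory.
Import numFieldNormedType.Exports.
Local Open Scope classical_set_scope.
Local Open Scope ring_scope.

(* j-th digit (j >= 1, after the point) of the base-s expansion of z in (0,1):
   floor(s^j z) mod s. *)
Definition digit {R : realType} (s j : nat) (z : R) : int :=
  (Num.floor ((s%:R) ^+ j * z) %% (s%:Z))%Z.

Definition nz_digit_positions {R : realType} {k : nat} (s : nat) (z : 'I_k -> R)
  : set nat :=
  [set j | (1 <= j)%N /\ exists i : 'I_k, digit s j (z i) != 0%Z].

(* b is an increasing enumeration of the set A (indexed from 0: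
   b 0 is the first element, i.e. b_1 of the paper). *)
Definition increasing_enum (A : set nat) (b : nat -> nat) : Prop :=
  (forall n, (b n < b n.+1)%N) /\ range b = A.

Definition approx_exponents {R : realType} {k : nat} (zeta : 'I_k -> R) (X : R)
  : set R :=
  [set nu | exists (x : int) (y : 'I_k -> int),
      (x != 0%Z \/ exists i, y i != 0%Z) /\
      `|(x%:~R : R)| <= X /\
      forall i, `|zeta i * x%:~R - (y i)%:~R| <= X `^ (- nu)].

Definition omega1 {R : realType} {k : nat} (zeta : 'I_k -> R) (X : R) : \bar R :=
  ereal_sup [set nu%:E | nu in approx_exponents zeta X].

Definition omega {R : realType} {k : nat} (zeta : 'I_k -> R) : \bar R :=
  limf_esup (omega1 zeta) (pinfty_nbhs R).

Definition gap_limsup {R : realType} (b : nat -> nat) : \bar R :=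
  limn_esup (fun n => (((b n.+1)%:R - (b n)%:R - 1) / (b n)%:R : R)%:E).

(* Main.v *)
Require Import Defs.
From HB Require Import structures.
From mathcomp Require Import all_boot all_order all_algebra.
From mathcomp Require Import all_classical all_reals all_analysis.
From mathcomp Require Import zify ring lra.
Import Order.TTheory GRing.Theory Num.Theory.
Local Open Scope classical_set_scope.
Local Open Scope ring_scope.

Lemma floor_step (R : realType) (s : nat) (a : R) : (0 < s)%N ->
  Num.floor (s%:R * a) = s%:Z * Num.floor a + (Num.floor (s%:R * a) %% s%:Z)%Z.
Proof.
move=> s0.
have e1 : ((s%:Z * Num.floor a)%:~R : R) = s%:R * (Num.floor a)%:~R.
  by rewrite rmorphM.
have e2 : ((s%:Z * Num.floor a + s%:Z)%:~R : R) = s%:R * ((Num.floor a + 1)%:~R).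
  by rewrite !rmorphD rmorphM /= mulrDr mulr1.
set r := Num.floor (s%:R * a) - s%:Z * Num.floor a.
have h1 : 0 <= r.
  rewrite subr_ge0 floor_ge_int e1.
  by apply: ler_wpM2l; [exact: ler0n | exact: floor_le].
have h2 : r < s%:Z.
  rewrite ltrBlDl floor_lt_int e2.
  by rewrite ltr_pM2l ?ltr0n // floorD1_gt.
have hm : ((Num.floor a * s%:Z + r) %% s%:Z)%Z = r.
  by rewrite modzMDl modz_small // h1 h2.
have -> : Num.floor (s%:R * a) = Num.floor a * s%:Z + r by rewrite /r; ring.
by rewrite hm; rewrite /r; ring.
Qed.

Lemma floor_pow_zero (R : realType) (s m t : nat) (z : R) : (0 < s)%N ->
  (forall u, (0 < u <= t)%N -> digit s (m + u) z = 0%Z) ->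
  Num.floor (s%:R ^+ (m + t) * z) = (s%:Z) ^+ t * Num.floor (s%:R ^+ m * z).
Proof.
move=> s0; elim: t => [|t IH] H.
  by rewrite addn0 expr0 mul1r.
have hd := H t.+1 (leqnn _).
rewrite /digit addnS exprS -mulrA in hd.
rewrite addnS exprS -mulrA floor_step // hd addr0 IH; last first.
  by move=> u /andP[u0 ut]; apply: H; rewrite u0 /= ltnW.
by rewrite exprS mulrA.
Qed.

Lemma approx_bound (R : realType) (s m g : nat) (z : R) : (0 < s)%N ->
  (forall u, (0 < u <= g)%N -> digit s (m + u) z = 0%Z) ->
  `|z * (s%:R ^+ m) - (Num.floor (s%:R ^+ m * z))%:~R| <= (s%:R ^+ g)^-1.
Proof.
move=> s0 H.
have e := @floor_pow_zero R s m g z s0 H.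
set F := Num.floor (s%:R ^+ m * z).
set A := s%:R ^+ m * z.
have hF : (F%:~R : R) <= A by exact: floor_le.
have hup := floorD1_gt (s%:R ^+ (m + g) * z).
rewrite e rmorphD rmorphM /= rmorph1 (addnC m g) exprD -mulrA -/A in hup.
have cpos : (0 : R) < s%:R ^+ g by rewrite exprn_gt0 // ltr0n.
have ee : ((s%:Z ^+ g)%:~R : R) = s%:R ^+ g by rewrite rmorphXn.
rewrite ee in hup.
rewrite mulrC -/A ger0_norm ?subr_ge0 //.
rewrite -(ler_pM2l cpos) mulfV ?gt_eqF //.
set c := s%:R ^+ g in cpos hup *.
set f := (F%:~R : R) in hF hup *.
rewrite mulrBr; move: hup; set p := c * A; set q := c * f. lra.
Qed.

Lemma enum_mono (b : nat -> nat) : (forall n, b n < b n.+1)%N ->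
  forall m n, (m <= n)%N -> (b m <= b n)%N.
Proof.
move=> hb m; elim=> [|n IH]; first by rewrite leqn0 => /eqP ->.
rewrite leq_eqVlt => /orP[/eqP -> //|hm].
by apply: leq_trans (IH hm) (ltnW (hb n)).
Qed.

Lemma enum_ge (b : nat -> nat) : (forall n, b n < b n.+1)%N -> forall n, (n <= b n)%N.
Proof. move=> hb; elim=> [//|n IH]; exact: leq_ltn_trans IH (hb n). Qed.

Lemma gap_zero (A : set nat) b n j : increasing_enum A b ->
  (b n < j < b n.+1)%N -> ~ A j.
Proof.
move=> [hb hr] /andP[h1 h2] Aj.
have : range b j by rewrite hr.
case=> m _ ebm; subst j.
case: (leqP m n) => hmn.
  by have := @enum_mono b hb _ _ hmn; rewrite leqNgt h1.
by have := @enum_mono b hb _ _ hmn; rewrite leqNgt h2.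
Qed.

Lemma key (R : realType) k s (z : 'I_k -> R) b n : (2 <= s)%N ->
  increasing_enum (nz_digit_positions s z) b ->
  forall i, `|z i * (s%:R ^+ b n) - (Num.floor (s%:R ^+ b n * z i))%:~R|
     <= (s%:R ^+ (b n.+1 - b n - 1)%N)^-1.
Proof.
move=> s2 hE i.
have hb := hE.1.
apply: approx_bound; first by apply: leq_trans s2.
move=> u /andP[u0 ug].
have nA := @gap_zero _ _ n (b n + u)%N hE.
case: (eqVneq (digit s (b n + u) (z i)) 0%Z) => // hne.
have hbn := hb n.
exfalso; apply: nA.
- by apply/andP; split; lia.
- split; first lia.
  by exists i.
Qed.

Lemma pow_eq (R : realType) (s m g : nat) : (0 < s)%N -> (0 < m)%N ->
  ((s%:R : R) ^+ m) `^ (- (g%:R / m%:R)) = (s%:R ^+ g)^-1.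
Proof.
move=> s0 m0.
rewrite -!powR_mulrn ?ler0n // -powRrM mulrN powRN.
by rewrite mulrCA mulfV ?mulr1 // pnatr_eq0 -lt0n.
Qed.

Lemma ratio_eq (R : realType) (b : nat -> nat) n : (b n < b n.+1)%N ->
  (((b n.+1)%:R - (b n)%:R - 1) / (b n)%:R : R) =
  (b n.+1 - b n - 1)%N%:R / (b n)%:R.
Proof.
move=> h; congr (_ / _).
set g := (b n.+1 - b n - 1)%N.
set m := b n.
have -> : b n.+1 = (m + g + 1)%N by rewrite /g /m; lia.
by rewrite !natrD; ring.
Qed.

Lemma bn_pos (R : realType) k s (z : 'I_k -> R) b n :
  increasing_enum (nz_digit_positions s z) b -> (0 < b n)%N.
Proof.
move=> hE; have : nz_digit_positions s z (b n) by rewrite -hE.2; exists n.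
by case.
Qed.

Lemma natX_int (R : realType) (s m : nat) :
  ((((s ^ m)%N)%:Z)%:~R : R) = (s%:R : R) ^+ m.
Proof. by rewrite -natrX. Qed.

Lemma mem1 (R : realType) k (zeta : 'I_k -> R) s b n : (2 <= s)%N ->
  increasing_enum (nz_digit_positions s zeta) b ->
  approx_exponents zeta ((s%:R : R) ^+ b n)
    (((b n.+1)%:R - (b n)%:R - 1) / (b n)%:R).
Proof.
move=> s2 hE.
have hb := hE.1.
have m0 := @bn_pos R k s _ b n hE.
rewrite ratio_eq //.
have s0 : (0 < s)%N by apply: leq_trans s2.
exists ((s ^ b n)%N)%:Z, (fun i => Num.floor (s%:R ^+ b n * zeta i)).
split; first by left; rewrite gt_eqF // ltz_nat expn_gt0 (leq_trans _ s2).
rewrite natX_int; split; first by rewrite ger0_norm // exprn_ge0 // ler0n.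
by move=> i; rewrite pow_eq //; exact: key.
Qed.

Lemma mem2 (R : realType) k (zeta : 'I_k -> R) s b n : (2 <= s)%N ->
  increasing_enum (nz_digit_positions s (fun i => 1 - zeta i)) b ->
  approx_exponents zeta ((s%:R : R) ^+ b n)
    (((b n.+1)%:R - (b n)%:R - 1) / (b n)%:R).
Proof.
move=> s2 hE.
have hb := hE.1.
have m0 := @bn_pos R k s _ b n hE.
rewrite ratio_eq //.
have s0 : (0 < s)%N by apply: leq_trans s2.
exists ((s ^ b n)%N)%:Z,
  (fun i => ((s ^ b n)%N)%:Z - Num.floor (s%:R ^+ b n * (1 - zeta i))).
split; first by left; rewrite gt_eqF // ltz_nat expn_gt0 (leq_trans _ s2).
rewrite natX_int; split; first by rewrite ger0_norm // exprn_ge0 // ler0n.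
move=> i; rewrite rmorphB /= natX_int pow_eq //.
have := @key R k s (fun i => 1 - zeta i) b n s2 hE i => /=.
set X := (s%:R : R) ^+ b n; set f := ((Num.floor _)%:~R : R).
have -> : zeta i * X - (X - f) = - ((1 - zeta i) * X - f) by ring.
by rewrite normrN.
Qed.

Lemma main_le (R : realType) k (zeta : 'I_k -> R) (bb : nat -> nat) s :
  (2 <= s)%N -> (forall n, (bb n < bb n.+1)%N) ->
  (forall n, approx_exponents zeta ((s%:R : R) ^+ bb n)
    (((bb n.+1)%:R - (bb n)%:R - 1) / (bb n)%:R)) ->
  (gap_limsup (R:=R) bb <= omega zeta)%E.
Proof.
move=> s2 hinc hap.
rewrite /omega /limf_esup.
apply: le_ereal_inf_tmp => _ [V [M [Mr HM]] <-].
have hN := archi_boundP (normr_ge0 M).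
set N := Num.bound `|M| in hN.
rewrite /gap_limsup /limn_esup /limf_esup.
pose u := (fun n : nat => ((((bb n.+1)%:R - (bb n)%:R - 1) / (bb n)%:R : R)%:E)).
change (ereal_inf [set ereal_sup (u @` W) | W in \oo] <= ereal_sup (omega1 zeta @` V))%E.
have hin : [set ereal_sup (u @` W) | W in \oo]
             (ereal_sup (u @` [set n | (N <= n)%N])).
  by exists [set n | (N <= n)%N] => //; exists N.
apply: (le_trans (ereal_inf_lbound hin)).
apply: ge_ereal_sup => _ [n hn <-].
have VX : V ((s%:R : R) ^+ bb n).
  apply: HM.
  apply: lt_le_trans (le_lt_trans (ler_norm M) hN) _.
  rewrite -natrX ler_nat.
  apply: (leq_trans (hn : (N <= n)%N)); apply: (leq_trans (@enum_ge bb hinc n)).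
  by apply: ltnW; rewrite ltn_expl.
apply: (@le_trans _ _ (omega1 zeta ((s%:R : R) ^+ bb n))); last first.
  by apply: ereal_sup_ubound; exists ((s%:R : R) ^+ bb n).
rewrite /omega1; apply: ereal_sup_ubound.
by exists (((bb n.+1)%:R - (bb n)%:R - 1) / (bb n)%:R).
Qed.

Theorem corollary2p2 (R : realType) (k : nat) (zeta : 'I_k -> R)
  (b b' : nat -> nat -> nat) :
  (1 <= k)%N ->
  (forall i, 0 < zeta i < 1) ->
  (forall (q0 : rat) (q : 'I_k -> rat),
      ratr q0 + \sum_(i < k) ratr (q i) * zeta i = 0 ->
      q0 = 0 /\ forall i, q i = 0) ->
  (forall s, (2 <= s)%N -> increasing_enum (nz_digit_positions s zeta) (b s)) ->
  (forall s, (2 <= s)%N ->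
      increasing_enum (nz_digit_positions s (fun i => 1 - zeta i)) (b' s)) ->
  (maxe (ereal_sup [set gap_limsup (R:=R) (b s) | s in [set s | (2 <= s)%N]])
        (ereal_sup [set gap_limsup (R:=R) (b' s) | s in [set s | (2 <= s)%N]])
   <= omega zeta)%E.
Proof.
move=> _ _ _ hb hb'.
rewrite ge_max; apply/andP; split; apply: ge_ereal_sup => _ [s s2 <-].
- apply: (@main_le R k zeta (b s) s s2 (hb s s2).1) => n.
  exact: (@mem1 R k zeta s (b s) n s2 (hb s s2)).
- apply: (@main_le R k zeta (b' s) s s2 (hb' s s2).1) => n.
  exact: (@mem2 R k zeta s (b' s) n s2 (hb' s s2)).
Qed.
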